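(* Let $Q\in\mathbb{R}^{n\times n}$ be symmetric positive definite, $\mathcal{E}=\{x: x^TQx\le1\}$, $\partial\mathcal{E}=\{x:x^TQx=1\}$, and $A\in\mathbb{R}^{n\times n}$. Then for every $x_0\in\partial\mathcal{E}$ the solution $x(t)=e^{At}x_0$ of $\dot x=Ax$ satisfies $x(t)\in\partial\mathcal{E}$ for all $t\ge0$ if and only if $$\sum_{i=0}^{k-1}\frac{1}{(k-1)!}\binom{k-1}{i}(A^i)^TQA^{k-i-1}=0\quad\text{for all }k=2,3,\dots$$ *)

(* Defs.v *)
(* real matrices are needed together with the matrix exponential
   (an infinite series), so we use Stdlib Reals with explicit n x n matrices
   represented as functions on indices, only entries with indices < n matter. *)
From Stdlib Require Import Arith Reals Lra Lia.
Open Scope R_scope.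

Definition mat := nat -> nat -> R.
Definition vec := nat -> R.

Fixpoint rsum (n : nat) (f : nat -> R) : R :=
  match n with O => 0 | S m => rsum m f + f m end.

Definition mmul (n : nat) (A B : mat) : mat :=
  fun i j => rsum n (fun k => A i k * B k j).

Definition mid : mat := fun i j => if Nat.eqb i j then 1 else 0.

Fixpoint mpow (n : nat) (A : mat) (k : nat) : mat :=
  match k with O => mid | S k' => mmul n A (mpow n A k') end.

Definition mtr (A : mat) : mat := fun i j => A j i.

Definition mvec (n : nat) (A : mat) (x : vec) : vec :=
  fun i => rsum n (fun j => A i j * x j).

Definition qform (n : nat) (Q : mat) (x : vec) : R :=
  rsum n (fun i => x i * rsum n (fun j => Q i j * x j)).

Definition symmetric (n : nat) (Q : mat) : Prop :=
  forall i j, (i < n)%nat -> (j < n)%nat -> Q i j = Q j i.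

Definition posdef (n : nat) (Q : mat) : Prop :=
  forall x : vec, (exists i, (i < n)%nat /\ x i <> 0) -> 0 < qform n Q x.

Definition is_mexp (n : nat) (A : mat) (t : R) (E : mat) : Prop :=
  forall i j, (i < n)%nat -> (j < n)%nat ->
    infinite_sum (fun k => t ^ k / INR (fact k) * mpow n A k i j) (E i j).

Definition Mk (n : nat) (Q A : mat) (k : nat) : mat :=
  fun i j => rsum k (fun l =>
    / INR (fact (k - 1)) * C (k - 1) l *
    mmul n (mtr (mpow n A l)) (mmul n Q (mpow n A (k - l - 1))) i j).

(* Main.v *)
Require Import Defs.
From Stdlib Require Import Reals Lra Lia Morphisms Setoid Classical.
From Coquelicot Require Import Coquelicot.
Import Defs.
Open Scope R_scope.


Lemma rsum_ext n f g : (forall k, (k < n)%nat -> f k = g k) -> rsum n f = rsum n g.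
Proof. induction n; simpl; intros H; auto. rewrite IHn, H; auto. Qed.

Lemma rsum_plus n f g : rsum n (fun k => f k + g k) = rsum n f + rsum n g.
Proof. induction n; simpl; [lra|]. rewrite IHn; lra. Qed.

Lemma rsum_scal_l n c f : c * rsum n f = rsum n (fun k => c * f k).
Proof. induction n; simpl; [lra|]. rewrite <- IHn; lra. Qed.

Lemma rsum_scal_r n c f : rsum n f * c = rsum n (fun k => f k * c).
Proof. induction n; simpl; [lra|]. rewrite <- IHn; lra. Qed.

Lemma rsum_zero n f : (forall k, (k < n)%nat -> f k = 0) -> rsum n f = 0.
Proof. induction n; simpl; intros H; auto. rewrite IHn, H; auto; lra. Qed.

Lemma rsum_swap n m f : rsum n (fun i => rsum m (fun j => f i j)) = rsum m (fun j => rsum n (fun i => f i j)).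
Proof. induction n; simpl. { symmetry; apply rsum_zero; auto. }
 rewrite IHn, <- rsum_plus. reflexivity. Qed.

Lemma rsum_le n f g : (forall k, (k < n)%nat -> f k <= g k) -> rsum n f <= rsum n g.
Proof. induction n; simpl; intros H; [lra|]. pose proof (H n). specialize (IHn (fun k Hk => H k ltac:(lia))). specialize (H0 ltac:(lia)); lra. Qed.

Lemma rsum_abs n f : Rabs (rsum n f) <= rsum n (fun k => Rabs (f k)).
Proof. induction n; simpl. rewrite Rabs_R0; lra. eapply Rle_trans. apply Rabs_triang. lra. Qed.

Lemma rsum_nonneg n f : (forall k, (k < n)%nat -> 0 <= f k) -> 0 <= rsum n f.
Proof. intros H. replace 0 with (rsum n (fun _ => 0)). apply rsum_le; auto. apply rsum_zero; auto. Qed.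

Lemma rsum_ge_term n f i : (forall k, (k < n)%nat -> 0 <= f k) -> (i < n)%nat -> f i <= rsum n f.
Proof. induction n; simpl; intros H Hi; [lia|].
 destruct (Nat.eq_dec i n) as [->|Hne].
 - pose proof (rsum_nonneg n f (fun k Hk => H k ltac:(lia))); lra.
 - pose proof (H n ltac:(lia)). pose proof (IHn (fun k Hk => H k ltac:(lia)) ltac:(lia)); lra. Qed.

Lemma rsum_mid n a f : (a < n)%nat -> rsum n (fun b => mid a b * f b) = f a.
Proof. induction n; simpl; intros Ha; [lia|]. unfold mid at 2.
 destruct (Nat.eqb_spec a n) as [->|Hne].
 - rewrite rsum_zero. lra. intros k Hk. unfold mid. destruct (Nat.eqb_spec n k); [lia|lra].
 - rewrite IHn by lia. lra. Qed.

Lemma rsum_mid' n a f : (a < n)%nat -> rsum n (fun b => f b * mid b a) = f a.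
Proof. intros Ha. rewrite <- (rsum_mid n a f Ha). apply rsum_ext. intros k _. unfold mid.
 destruct (Nat.eqb_spec a k), (Nat.eqb_spec k a); subst; try lia; lra. Qed.

Lemma sum_f_R0_rsum f m : sum_f_R0 f m = rsum (S m) f.
Proof. induction m; simpl; [lra|]. rewrite IHm. reflexivity. Qed.

Lemma rsum_shift n f : rsum (S n) f = f 0%nat + rsum n (fun k => f (S k)).
Proof. induction n; simpl in *; [lra|]. rewrite IHn; lra. Qed.

Lemma rsum_rev n f : rsum n f = rsum n (fun k => f (n - 1 - k)%nat).
Proof. induction n. reflexivity.
 rewrite (rsum_shift n (fun k => f (S n - 1 - k)%nat)). change (rsum (S n) f) with (rsum n f + f n). rewrite IHn. cbv beta. replace (S n - 1 - 0)%nat with n by lia.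
 rewrite Rplus_comm. f_equal. apply rsum_ext. intros k Hk. f_equal. lia. Qed.

Lemma is_series_zero : is_series (fun _ : nat => 0) 0.
Proof. pose proof (is_series_scal_r 0 _ _ (is_series_geom 0 ltac:(rewrite Rabs_R0; lra))) as H.
 rewrite Rmult_0_r in H. eapply is_series_ext; [|exact H]. intros; simpl; lra. Qed.

Lemma is_series_rsum n (f : nat -> nat -> R) (l : nat -> R) :
  (forall b, (b < n)%nat -> is_series (f b) (l b)) ->
  is_series (fun k => rsum n (fun b => f b k)) (rsum n l).
Proof. induction n; simpl; intros H.
 - apply (is_series_ext (fun _ => 0)); auto. apply is_series_zero.
 - apply (is_series_plus (fun k => rsum n (fun b => f b k)) (f n)).
   apply IHn; auto. apply H; lia. Qed.


#[export] Instance rsum_proper n : Proper (pointwise_relation nat eq ==> eq) (rsum n).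
Proof. intros f g H. apply rsum_ext. intros; apply H. Qed.

Ltac distr := repeat (setoid_rewrite rsum_scal_l || setoid_rewrite rsum_scal_r).

Definition vv n A x0 k a := mvec n (mpow n A k) x0 a.
Definition ww n (Q : mat) A x0 k (a : nat) := rsum n (fun b => Q a b * vv n A x0 k b).
Definition GG n Q A x0 l r := rsum n (fun a => vv n A x0 l a * ww n Q A x0 r a).

Lemma sum4_perm n (f : nat -> nat -> nat -> nat -> R) :
  rsum n (fun i => rsum n (fun j => rsum n (fun p => rsum n (fun q => f i j p q)))) =
  rsum n (fun p => rsum n (fun q => rsum n (fun j => rsum n (fun i => f i j p q)))).
Proof.
 transitivity (rsum n (fun i => rsum n (fun p => rsum n (fun j => rsum n (fun q => f i j p q))))).
 { apply rsum_ext; intros. apply rsum_swap. }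
 rewrite rsum_swap. apply rsum_ext; intros p _.
 transitivity (rsum n (fun i => rsum n (fun q => rsum n (fun j => f i j p q)))).
 { apply rsum_ext; intros. apply rsum_swap. }
 rewrite rsum_swap. apply rsum_ext; intros q _. apply rsum_swap.
Qed.

Lemma qform_B n Q A x0 l r :
  qform n (fun i j => mmul n (mtr (mpow n A l)) (mmul n Q (mpow n A r)) i j) x0 = GG n Q A x0 l r.
Proof.
 unfold qform, GG, ww, vv, mvec, mmul, mtr. distr.
 (* LHS: i j p q ; RHS: a i q j *)
 rewrite sum4_perm. apply rsum_ext; intros a _. apply rsum_ext; intros q _.
 apply rsum_ext; intros j _. apply rsum_ext; intros i _. ring.
Qed.

Lemma qform_lin n K (c : nat -> R) (M : nat -> mat) x :
  qform n (fun i j => rsum K (fun l => c l * M l i j)) x = rsum K (fun l => c l * qform n (M l) x).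
Proof.
 unfold qform. distr.
 transitivity (rsum n (fun i => rsum K (fun l => rsum n (fun j => x i * (c l * M l i j * x j))))).
 { apply rsum_ext; intros. apply rsum_swap. }
 rewrite rsum_swap. apply rsum_ext; intros l _. apply rsum_ext; intros i _.
 apply rsum_ext; intros j _. ring.
Qed.

Lemma qform_Mk n Q A x0 m :
  qform n (Mk n Q A (S m)) x0 =
  rsum (S m) (fun l => / INR (Factorial.fact m) * Binomial.C m l * GG n Q A x0 l (m - l)).
Proof.
 transitivity (qform n (fun i j => rsum (S m) (fun l => (/ INR (Factorial.fact m) * Binomial.C m l) *
   mmul n (mtr (mpow n A l)) (mmul n Q (mpow n A (m - l))) i j)) x0).
 - unfold qform. apply rsum_ext; intros i _. f_equal. apply rsum_ext; intros j _. f_equal.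
   unfold Mk. replace (S m - 1)%nat with m by lia. apply rsum_ext; intros l Hl.
   replace (S m - l - 1)%nat with (m - l)%nat by lia. reflexivity.
 - rewrite qform_lin. apply rsum_ext; intros l _. rewrite qform_B. reflexivity.
Qed.

Lemma rsum_const n c : rsum n (fun _ => c) = INR n * c.
Proof. induction n; simpl rsum. simpl; lra. rewrite IHn, S_INR. lra. Qed.

Definition cA n (A : mat) := rsum n (fun i => rsum n (fun j => Rabs (A i j))).
Definition Xn n (x : vec) := rsum n (fun b => Rabs (x b)).

Lemma cA_nonneg n A : 0 <= cA n A.
Proof. apply rsum_nonneg; intros; apply rsum_nonneg; intros; apply Rabs_pos. Qed.
Lemma Xn_nonneg n x : 0 <= Xn n x.
Proof. apply rsum_nonneg; intros; apply Rabs_pos. Qed.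

Lemma row_le n A a : (a < n)%nat -> rsum n (fun l => Rabs (A a l)) <= cA n A.
Proof. intros Ha. unfold cA. apply (rsum_ge_term n (fun i => rsum n (fun j => Rabs (A i j)))); auto.
 intros; apply rsum_nonneg; intros; apply Rabs_pos. Qed.

Lemma mpow_bound n A k a b : (a < n)%nat -> Rabs (mpow n A k a b) <= cA n A ^ k.
Proof.
 revert a b; induction k; intros a b Ha; simpl.
 - unfold mid. destruct (Nat.eqb a b); rewrite ?Rabs_R1, ?Rabs_R0; lra.
 - unfold mmul. eapply Rle_trans. apply rsum_abs.
   eapply Rle_trans. apply (rsum_le _ _ (fun l => Rabs (A a l) * cA n A ^ k)).
   { intros l Hl. rewrite Rabs_mult. apply Rmult_le_compat_l. apply Rabs_pos. auto. }
   rewrite <- rsum_scal_r. apply Rmult_le_compat_r. apply pow_le, cA_nonneg. apply row_le; auto.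
Qed.

Lemma vv_bound n A x0 k a : (a < n)%nat -> Rabs (vv n A x0 k a) <= cA n A ^ k * Xn n x0.
Proof.
 intros Ha. unfold vv, mvec, Xn. eapply Rle_trans. apply rsum_abs. rewrite rsum_scal_l.
 apply rsum_le; intros b Hb. rewrite Rabs_mult. apply Rmult_le_compat_r. apply Rabs_pos.
 apply mpow_bound; auto.
Qed.

Lemma ww_bound n Q A x0 k a : (a < n)%nat -> Rabs (ww n Q A x0 k a) <= cA n Q * (cA n A ^ k * Xn n x0).
Proof.
 intros Ha. unfold ww. eapply Rle_trans. apply rsum_abs.
 eapply Rle_trans. apply (rsum_le _ _ (fun b => Rabs (Q a b) * (cA n A ^ k * Xn n x0))).
 { intros b Hb. rewrite Rabs_mult. apply Rmult_le_compat_l. apply Rabs_pos. apply vv_bound; auto. }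
 rewrite <- rsum_scal_r. apply Rmult_le_compat_r.
 apply Rmult_le_pos. apply pow_le, cA_nonneg. apply Xn_nonneg. apply row_le; auto.
Qed.

Lemma GG_bound n Q A x0 l r : Rabs (GG n Q A x0 l r) <= INR n * cA n Q * Xn n x0 ^ 2 * cA n A ^ (l + r).
Proof.
 unfold GG. eapply Rle_trans. apply rsum_abs.
 eapply Rle_trans. apply (rsum_le _ _ (fun _ => (cA n A ^ l * Xn n x0) * (cA n Q * (cA n A ^ r * Xn n x0)))).
 { intros a Ha. rewrite Rabs_mult. apply Rmult_le_compat. apply Rabs_pos. apply Rabs_pos.
   apply vv_bound; auto. apply ww_bound; auto. }
 rewrite rsum_const, pow_add. right; ring.
Qed.


Lemma ex_exp_bound (K z : R) : ex_series (fun k => K * (/ INR (Factorial.fact k) * z ^ k)).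
Proof.
 apply (ex_series_scal_l K (fun k => / INR (Factorial.fact k) * z ^ k)).
 exists (exp z). apply is_pseries_R. apply is_exp_Reals.
Qed.

Lemma abs_coef t k : Rabs (t ^ k / INR (Factorial.fact k)) = / INR (Factorial.fact k) * Rabs t ^ k.
Proof. unfold Rdiv. rewrite Rabs_mult, RPow_abs, Rabs_inv, (Rabs_pos_eq (INR _)). ring.
 apply pos_INR. Qed.

Lemma key n Q A x0 t E : is_mexp n A t E ->
 is_series (fun m => t ^ m * qform n (Mk n Q A (S m)) x0) (qform n Q (mvec n E x0)).
Proof.
 intros HE.
 set (c := cA n A). set (X := Xn n x0). set (y := mvec n E x0).
 assert (Hy : forall a, (a < n)%nat -> is_series (fun k => t ^ k / INR (Factorial.fact k) * vv n A x0 k a) (y a)).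
 { intros a Ha. unfold y, mvec.
   eapply is_series_ext; [|apply (is_series_rsum n (fun b k => t ^ k / INR (Factorial.fact k) * mpow n A k a b * x0 b))].
   - intros k. simpl. unfold vv, mvec. rewrite rsum_scal_l. apply rsum_ext; intros; ring.
   - intros b Hb. apply is_series_scal_r. apply is_series_Reals. apply HE; auto. }
 assert (Hz : forall a, (a < n)%nat -> is_series (fun k => t ^ k / INR (Factorial.fact k) * ww n Q A x0 k a) (rsum n (fun b => Q a b * y b))).
 { intros a Ha.
   eapply is_series_ext; [|apply (is_series_rsum n (fun b k => t ^ k / INR (Factorial.fact k) * vv n A x0 k b * Q a b))].
   - intros k. simpl. unfold ww. rewrite rsum_scal_l. apply rsum_ext; intros; ring.
   - intros b Hb. replace (Q a b * y b) with (y b * Q a b) by ring.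
     apply is_series_scal_r. apply Hy; auto. }

 assert (Ay : forall a, (a < n)%nat -> ex_series (fun k => Rabs (t ^ k / INR (Factorial.fact k) * vv n A x0 k a))).
 { intros a Ha. apply (@ex_series_le R_AbsRing R_CompleteNormedModule _ (fun k => X * (/ INR (Factorial.fact k) * (Rabs t * c) ^ k))).
   2: apply ex_exp_bound.
   intros k. change (norm (Rabs (t ^ k / INR (Factorial.fact k) * vv n A x0 k a))) with
     (Rabs (Rabs (t ^ k / INR (Factorial.fact k) * vv n A x0 k a))).
   rewrite Rabs_Rabsolu, Rabs_mult, abs_coef, Rpow_mult_distr.
   pose proof (vv_bound n A x0 k a Ha). fold c X in H.
   pose proof (Rinv_0_lt_compat _ (INR_fact_lt_0 k)). pose proof (pow_le _ k (Rabs_pos t)).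
   apply Rle_trans with (/ INR (Factorial.fact k) * Rabs t ^ k * (c ^ k * X)).
   apply Rmult_le_compat_l; auto. apply Rmult_le_pos; lra. right; ring. }
 assert (Az : forall a, (a < n)%nat -> ex_series (fun k => Rabs (t ^ k / INR (Factorial.fact k) * ww n Q A x0 k a))).
 { intros a Ha. apply (@ex_series_le R_AbsRing R_CompleteNormedModule _ (fun k => (cA n Q * X) * (/ INR (Factorial.fact k) * (Rabs t * c) ^ k))).
   2: apply ex_exp_bound.
   intros k. change (norm (Rabs (t ^ k / INR (Factorial.fact k) * ww n Q A x0 k a))) with
     (Rabs (Rabs (t ^ k / INR (Factorial.fact k) * ww n Q A x0 k a))).
   rewrite Rabs_Rabsolu, Rabs_mult, abs_coef, Rpow_mult_distr.
   pose proof (ww_bound n Q A x0 k a Ha). fold c X in H.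
   pose proof (Rinv_0_lt_compat _ (INR_fact_lt_0 k)). pose proof (pow_le _ k (Rabs_pos t)).
   apply Rle_trans with (/ INR (Factorial.fact k) * Rabs t ^ k * (cA n Q * (c ^ k * X))).
   apply Rmult_le_compat_l; auto. apply Rmult_le_pos; lra. right; ring. }
 eapply is_series_ext; [|apply (is_series_rsum n (fun a m => sum_f_R0 (fun l =>
    (t ^ l / INR (Factorial.fact l) * vv n A x0 l a) *
    (t ^ (m - l) / INR (Factorial.fact (m - l)) * ww n Q A x0 (m - l) a)) m)
    (fun a => y a * rsum n (fun b => Q a b * y b)))].
 2: { intros a Ha. apply (is_series_mult (fun l => t ^ l / INR (Factorial.fact l) * vv n A x0 l a) (fun k => t ^ k / INR (Factorial.fact k) * ww n Q A x0 k a)); auto. }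
 intros m. simpl. rewrite qform_Mk.
 transitivity (rsum n (fun a => rsum (S m) (fun l =>
    (t ^ l / INR (Factorial.fact l) * vv n A x0 l a) *
    (t ^ (m - l) / INR (Factorial.fact (m - l)) * ww n Q A x0 (m - l) a)))).
 { apply rsum_ext; intros. apply sum_f_R0_rsum. }
 rewrite rsum_swap, rsum_scal_l. apply rsum_ext; intros l Hl.
 unfold GG. rewrite !rsum_scal_l. apply rsum_ext; intros a _.
 replace (t ^ m) with (t ^ l * t ^ (m - l)) by (rewrite <- pow_add; f_equal; lia).
 unfold Binomial.C. field. repeat split; apply INR_fact_neq_0.
Qed.


Lemma qform_Mk1 n Q A x0 : qform n (Mk n Q A 1) x0 = qform n Q x0.
Proof.
 rewrite qform_Mk. simpl rsum. unfold Binomial.C. simpl Factorial.fact. simpl INR.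
 unfold GG, ww, qform. replace (/ 1 * (1 / (1 * 1))) with 1 by field. rewrite Rplus_0_l, Rmult_1_l.
 apply rsum_ext; intros a Ha. unfold vv, mvec. simpl mpow. rewrite rsum_mid by auto.
 f_equal. apply rsum_ext; intros b Hb. rewrite rsum_mid by auto. reflexivity.
Qed.

Lemma qform_zero n M x : (forall i j, (i < n)%nat -> (j < n)%nat -> M i j = 0) -> qform n M x = 0.
Proof. intros H. unfold qform. apply rsum_zero; intros i Hi. rewrite rsum_zero. ring.
 intros j Hj. rewrite H by auto. ring. Qed.

Lemma mexp_exists n A t : exists E, is_mexp n A t E.
Proof.
 exists (fun i j => Series (fun k => t ^ k / INR (Factorial.fact k) * mpow n A k i j)).
 intros i j Hi Hj. apply is_series_Reals. apply Series_correct. apply ex_series_Rabs.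
 apply (@ex_series_le R_AbsRing R_CompleteNormedModule _ (fun k => 1 * (/ INR (Factorial.fact k) * (Rabs t * cA n A) ^ k))).
 2: apply ex_exp_bound.
 intros k. change (norm (Rabs (t ^ k / INR (Factorial.fact k) * mpow n A k i j))) with
     (Rabs (Rabs (t ^ k / INR (Factorial.fact k) * mpow n A k i j))).
 rewrite Rabs_Rabsolu, Rabs_mult, abs_coef, Rpow_mult_distr.
 pose proof (mpow_bound n A k i j Hi).
 pose proof (Rinv_0_lt_compat _ (INR_fact_lt_0 k)). pose proof (pow_le _ k (Rabs_pos t)).
 apply Rle_trans with (/ INR (Factorial.fact k) * Rabs t ^ k * (cA n A ^ k)).
 apply Rmult_le_compat_l; auto. apply Rmult_le_pos; lra. right; ring.
Qed.

Lemma C_nonneg m l : 0 <= Binomial.C m l.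
Proof. unfold Binomial.C. apply Rle_mult_inv_pos. apply pos_INR.
 apply Rmult_lt_0_compat; apply INR_fact_lt_0. Qed.

Lemma sum_C m : rsum (S m) (fun l => Binomial.C m l) = 2 ^ m.
Proof. replace 2 with (1 + 1) by ring. rewrite binomial, sum_f_R0_rsum.
 apply rsum_ext; intros. rewrite !pow1. ring. Qed.

Lemma d_bound n Q A x0 m :
  Rabs (qform n (Mk n Q A (S m)) x0) <=
  (INR n * cA n Q * Xn n x0 ^ 2) * (/ INR (Factorial.fact m) * (2 * cA n A) ^ m).
Proof.
 rewrite qform_Mk. eapply Rle_trans. apply rsum_abs.
 set (K0 := INR n * cA n Q * Xn n x0 ^ 2).
 eapply Rle_trans. apply (rsum_le _ _ (fun l => Binomial.C m l * (/ INR (Factorial.fact m) * K0 * cA n A ^ m))).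
 { intros l Hl. rewrite !Rabs_mult. rewrite (Rabs_pos_eq (Binomial.C m l)) by apply C_nonneg.
   rewrite Rabs_inv, (Rabs_pos_eq (INR _)) by apply pos_INR.
   pose proof (GG_bound n Q A x0 l (m - l)). replace (l + (m - l))%nat with m in H by lia.
   fold K0 in H. pose proof (C_nonneg m l). pose proof (Rinv_0_lt_compat _ (INR_fact_lt_0 m)).
   apply Rle_trans with (/ INR (Factorial.fact m) * Binomial.C m l * (K0 * cA n A ^ m)).
   apply Rmult_le_compat_l; auto. apply Rmult_le_pos; lra. right; ring. }
 rewrite <- rsum_scal_r, sum_C, Rpow_mult_distr. right; ring.
Qed.


Lemma is_series_mulc (c : R) a l : is_series a l -> is_series (fun k => c * a k) (c * l).
Proof. intros H. rewrite Rmult_comm. eapply is_series_ext; [|apply (is_series_scal_r c _ _ H)].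
 intros; simpl; ring. Qed.

Lemma pow_le_1 t k : 0 <= t <= 1 -> t ^ k <= 1.
Proof. intros H. induction k; simpl. lra. pose proof (pow_le t k ltac:(lra)).
 apply Rle_trans with (1 * 1); [|lra]. apply Rmult_le_compat; lra. Qed.

Lemma coeffs_zero (d b : nat -> R) : (forall m, Rabs (d m) <= b m) -> ex_series b ->
 (forall t, 0 < t <= 1 -> is_series (fun m => t ^ m * d m) (d 0%nat)) ->
 forall m, (1 <= m)%nat -> d m = 0.
Proof.
 intros Hb Eb Hs m. induction m as [m IH] using Wf_nat.lt_wf_ind. intros Hm.
 set (S0 := Series (fun k => b (m + S k)%nat)).
 assert (Eb' : ex_series (fun k => b (m + S k)%nat)).
 { apply (ex_series_incr_n _ (S m)) in Eb. eapply ex_series_ext; [|exact Eb].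
   intros k; simpl; f_equal; lia. }
 assert (Hle : forall t, 0 < t <= 1 -> Rabs (d m) <= t * S0).
 { intros t Ht. pose proof (Hs t Ht) as H0.
   assert (Hsum : forall j, (j < m)%nat -> sum_n (fun k => t ^ k * d k) j = d 0%nat).
   { induction j; intros Hj. rewrite sum_O. simpl; ring.
     rewrite sum_Sn, IHj by lia. rewrite (IH (S j)) by lia.
     rewrite Rmult_0_r. apply (plus_zero_r (G:=R_AbelianMonoid)). }
   assert (H1 : is_series (fun k => t ^ (m + k) * d (m + k)%nat) 0).
   { apply (is_series_incr_n (fun k => t ^ k * d k) m 0). lia.
     rewrite Hsum by lia. change (plus 0 (d 0%nat)) with (0 + d 0%nat). rewrite Rplus_0_l. exact H0. }
   assert (Htm : t ^ m <> 0) by (apply pow_nonzero; lra).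
   assert (H2 : is_series (fun k => t ^ k * d (m + k)%nat) 0).
   { apply is_series_mulc with (c := / t ^ m) in H1. rewrite Rmult_0_r in H1.
     eapply is_series_ext; [|exact H1]. intros k. simpl. rewrite pow_add. field. auto. }
   assert (H3 : is_series (fun k => t ^ S k * d (m + S k)%nat) (- d m)).
   { apply (is_series_incr_1 (fun k => t ^ k * d (m + k)%nat)).
     change (is_series (fun k => t ^ k * d (m + k)%nat) (- d m + t ^ 0 * d (m + 0)%nat)).
     rewrite Nat.add_0_r. replace (- d m + t ^ 0 * d m) with 0 by (simpl; ring). exact H2. }
   assert (H4 : is_series (fun k => t ^ k * d (m + S k)%nat) (/ t * - d m)).
   { apply is_series_mulc with (c := / t) in H3. eapply is_series_ext; [|exact H3].
     intros k. simpl. field. lra. }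
   assert (Ea : ex_series (fun k => Rabs (t ^ k * d (m + S k)%nat))).
   { apply (@ex_series_le R_AbsRing R_CompleteNormedModule _ (fun k => b (m + S k)%nat)); [|exact Eb'].
     intros k.
     change (norm (Rabs (t ^ k * d (m + S k)%nat))) with (Rabs (Rabs (t ^ k * d (m + S k)%nat))).
     rewrite Rabs_Rabsolu, Rabs_mult. rewrite Rabs_pos_eq by (apply pow_le; lra).
     apply Rle_trans with (1 * b (m + S k)%nat); [|lra].
     apply Rmult_le_compat. apply pow_le; lra. apply Rabs_pos. apply pow_le_1; lra. apply Hb. }
   pose proof (Series_Rabs _ Ea). rewrite (is_series_unique _ _ H4) in H.
   assert (Series (fun k => Rabs (t ^ k * d (m + S k)%nat)) <= S0).
   { apply Series_le; auto. intros k. split. apply Rabs_pos.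
     rewrite Rabs_mult. rewrite Rabs_pos_eq by (apply pow_le; lra).
     apply Rle_trans with (1 * b (m + S k)%nat); [|lra].
     apply Rmult_le_compat. apply pow_le; lra. apply Rabs_pos. apply pow_le_1; lra. apply Hb. }
   rewrite Rabs_mult, Rabs_Ropp, Rabs_inv, Rabs_pos_eq in H by lra.
   assert (Rabs (d m) <= t * (/ t * Rabs (d m))) by (right; field; lra).
   assert (t * (/ t * Rabs (d m)) <= t * S0) by (apply Rmult_le_compat_l; lra). lra. }
 pose proof (Hle 1 ltac:(lra)).
 destruct (Req_dec (d m) 0) as [|Hne]; auto. exfalso.
 pose proof (Rabs_pos_lt _ Hne) as Hp.
 set (t := Rmin 1 (Rabs (d m) / (2 * (S0 + 1)))).
 assert (S0 >= 0) by (pose proof (Rabs_pos (d m)); lra).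
 assert (0 < t <= 1).
 { unfold t. split. apply Rmin_pos. lra. apply Rdiv_lt_0_compat; lra. apply Rmin_l. }
 pose proof (Hle t H1).
 assert (t <= Rabs (d m) / (2 * (S0 + 1))) by apply Rmin_r.
 assert (t * S0 <= Rabs (d m) / (2 * (S0 + 1)) * S0) by (apply Rmult_le_compat_r; lra).
 assert (Rabs (d m) / (2 * (S0 + 1)) * S0 < Rabs (d m)).
 { apply Rmult_lt_reg_r with (2 * (S0 + 1)). lra. field_simplify; nra. }
 lra.
Qed.


Lemma qform_scale n M x s : qform n M (fun i => s * x i) = s ^ 2 * qform n M x.
Proof. unfold qform. rewrite rsum_scal_l. apply rsum_ext; intros i _.
 replace (rsum n (fun j => M i j * (s * x j))) with (s * rsum n (fun j => M i j * x j)). ring.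
 rewrite rsum_scal_l. apply rsum_ext; intros; ring. Qed.

Lemma qform_allzero n M x : (forall i, (i < n)%nat -> x i = 0) -> qform n M x = 0.
Proof. intros H. unfold qform. apply rsum_zero; intros i Hi. rewrite H by auto. ring. Qed.

Definition bil n (M : mat) (u w : vec) := rsum n (fun a => u a * rsum n (fun b => M a b * w b)).

Lemma qform_add n M u w : qform n M (fun k => u k + w k) = qform n M u + qform n M w + bil n M u w + bil n M w u.
Proof. unfold qform, bil. rewrite <- !rsum_plus. apply rsum_ext; intros a _.
 replace (rsum n (fun b => M a b * (u b + w b))) with (rsum n (fun b => M a b * u b) + rsum n (fun b => M a b * w b)).
 ring. rewrite <- rsum_plus. apply rsum_ext; intros; ring. Qed.

Lemma bil_e n M i j : (i < n)%nat -> (j < n)%nat -> bil n M (fun k => mid k i) (fun k => mid k j) = M i j.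
Proof. intros Hi Hj. unfold bil.
 transitivity (rsum n (fun a => mid i a * M a j)).
 2: apply (rsum_mid n i (fun a => M a j)); auto.
 apply rsum_ext. intros a Ha. rewrite rsum_mid' by auto. unfold mid. rewrite Nat.eqb_sym. reflexivity.
Qed.

Lemma polar n M : (forall i j, (i < n)%nat -> (j < n)%nat -> M i j = M j i) ->
  (forall x, qform n M x = 0) -> forall i j, (i < n)%nat -> (j < n)%nat -> M i j = 0.
Proof. intros Hs Hq i j Hi Hj.
 pose proof (qform_add n M (fun k => mid k i) (fun k => mid k j)).
 rewrite !Hq in H. unfold qform in H. fold (bil n M (fun k => mid k i) (fun k => mid k j)) in H.
 rewrite !bil_e in H by auto. rewrite (Hs j i) in H by auto. lra. Qed.

Lemma B_sym (n : nat) (Q A : mat) (l r i j : nat) : Defs.symmetric n Q ->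
  mmul n (mtr (mpow n A l)) (mmul n Q (mpow n A r)) i j = mmul n (mtr (mpow n A r)) (mmul n Q (mpow n A l)) j i.
Proof. intros HQ. unfold mmul, mtr. distr. rewrite rsum_swap. apply rsum_ext; intros p Hp.
 apply rsum_ext; intros q Hq. rewrite (HQ q p) by auto. ring. Qed.

Lemma C_sym m l : (l <= m)%nat -> Binomial.C m (m - l) = Binomial.C m l.
Proof. intros H. unfold Binomial.C. replace (m - (m - l))%nat with l by lia. field.
 split; apply INR_fact_neq_0. Qed.

Lemma Mk_sym (n : nat) (Q A : mat) (k i j : nat) : Defs.symmetric n Q -> Mk n Q A k i j = Mk n Q A k j i.
Proof. intros HQ. unfold Mk. rewrite (rsum_rev k). apply rsum_ext; intros l Hl.
 replace (k - 1 - l)%nat with (k - l - 1)%nat by lia.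
 replace (k - (k - l - 1) - 1)%nat with l by lia.
 replace (k - l - 1)%nat with (k - 1 - l)%nat by lia. rewrite C_sym by lia.
 rewrite (B_sym n Q A (k - 1 - l) l i j HQ). reflexivity. Qed.

Import Defs.

Theorem proposition3p14 (n : nat) (Q A : mat) :
  symmetric n Q -> posdef n Q ->
  ((forall x0 : vec, qform n Q x0 = 1 ->
      forall (t : R) (E : mat), 0 <= t -> is_mexp n A t E ->
        qform n Q (mvec n E x0) = 1)
   <->
   (forall k : nat, (2 <= k)%nat ->
      forall i j, (i < n)%nat -> (j < n)%nat -> Mk n Q A k i j = 0)).
Proof.
 intros HQ Hpd. split.
 - intros H.
   assert (Hq : forall x, qform n Q x = 1 -> forall m, (1 <= m)%nat -> qform n (Mk n Q A (S m)) x = 0).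
   { intros x Hx.
     apply (coeffs_zero (fun m => qform n (Mk n Q A (S m)) x)
       (fun m => (INR n * cA n Q * Xn n x ^ 2) * (/ INR (Factorial.fact m) * (2 * cA n A) ^ m))).
     - intros m. apply d_bound.
     - apply ex_exp_bound.
     - intros t Ht. destruct (mexp_exists n A t) as [E HE].
       pose proof (key n Q A x t E HE) as K.
       rewrite (H x Hx t E ltac:(lra) HE) in K. rewrite qform_Mk1, Hx. exact K. }
   assert (Hall : forall m, (1 <= m)%nat -> forall x, qform n (Mk n Q A (S m)) x = 0).
   { intros m Hm x. destruct (classic (exists i, (i < n)%nat /\ x i <> 0)) as [Hex|Hne].
     - pose proof (Hpd x Hex) as Hp. set (q := qform n Q x) in *.
       assert (Hsq : 0 < sqrt q) by (apply sqrt_lt_R0; auto).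
       set (s := / sqrt q).
       assert (Hs2 : s ^ 2 * q = 1).
       { unfold s. rewrite <- (pow2_sqrt q) at 2 by lra. field. lra. }
       pose proof (Hq (fun i => s * x i) ltac:(rewrite qform_scale; exact Hs2) m Hm) as Z.
       rewrite qform_scale in Z. assert (s ^ 2 <> 0) by (intro Hz; rewrite Hz in Hs2; lra).
       apply Rmult_integral in Z. destruct Z; [contradiction|auto].
     - apply qform_allzero. intros i Hi. destruct (Req_dec (x i) 0); auto.
       exfalso; apply Hne; eauto. }
   intros k Hk i j Hi Hj. destruct k as [|m]; [lia|].
   apply (polar n (Mk n Q A (S m))); auto.
   + intros; apply Mk_sym; auto.
   + apply Hall; lia.
 - intros H x0 Hx t E Ht HE.
   pose proof (key n Q A x0 t E HE) as K.
   apply is_series_unique in K. rewrite <- K. apply is_series_unique.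
   apply is_series_decr_1.
   change (is_series (fun k => t ^ S k * qform n (Mk n Q A (S (S k))) x0)
     (1 + - (t ^ 0 * qform n (Mk n Q A 1) x0))).
   rewrite qform_Mk1, Hx. replace (1 + - (t ^ 0 * 1)) with 0 by (simpl; ring).
   eapply is_series_ext; [|apply is_series_zero]. intros k. simpl.
   rewrite qform_zero. ring. intros i j Hi Hj. apply H; auto. lia.
Qed.
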